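(* Let $n\ge2$, $k\in\{1,\ldots,n\}$, $r\in\mathbb{R}$, and $x^0\in\mathbb{R}^n$ with $x^0_1\ge\cdots\ge x^0_n$ and $\sum_{i=1}^k x^0_i>r$. Suppose that along the trajectory of the ESGS procedure a transition from $(k_0,k_1)$ to $(k_0,k_1+1)$ occurs. Then the optimal index pair $(\bar k_0,\bar k_1)$, i.e. the index pair satisfying all of $\mathtt{kkt}_1,\ldots,\mathtt{kkt}_5$, satisfies $\bar k_0\le k_0$ and $\bar k_1\ge k_1$.
   Context: Conventions: $x^0_0:=+\infty$, $x^0_{n+1}:=-\infty$. For $k_0\in\{0,\ldots,k-1\}$ and $k_1\in\{k,\ldots,n\}$ define $S_\alpha=\sum_{i=1}^{k_0}x^0_i-r$, $S_\beta=\sum_{i=k_0+1}^{k_1}x^0_i$, $\rho=k_0(k_1-k_0)+(k-k_0)^2$, $\theta(k_0,k_1)=(k_0S_\beta-(k-k_0)S_\alpha)/\rho$, $\lambda(k_0,k_1)=((k-k_0)S_\beta+(k_1-k_0)S_\alpha)/\rho$. KKT indicators: $\mathtt{kkt}_1$: $\lambda>0$; $\mathtt{kkt}_2$: $x^0_{k_0}>\theta+\lambda$; $\mathtt{kkt}_3$: $\theta+\lambda\ge x^0_{k_0+1}$; $\mathtt{kkt}_4$: $x^0_{k_1}\ge\theta$; $\mathtt{kkt}_5$: $\theta>x^0_{k_1+1}$. An index pair satisfying all five indicators yields the solution of the sorted projection problem. ESGS trajectory: start at $(k_0,k_1)=(k-1,k)$ and repeat: if $\mathtt{kkt}_2\wedge\mathtt{kkt}_5$,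 stop; else if $\mathtt{kkt}_2$, $k_1\gets k_1+1$; else $k_0\gets k_0-1$. *)

(* Defs.v *)
From HB Require Import structures.
From mathcomp Require Import all_boot all_order all_algebra.
Set Implicit Arguments. Unset Strict Implicit. Unset Printing Implicit Defensive.
Import Order.TTheory GRing.Theory Num.Theory.
Local Open Scope ring_scope.

Section ESGS.
Variables (R : realFieldType) (n k : nat) (r : R) (x : n.-tuple R).

(* 1-based access: xe i = x^0_i for 1 <= i <= n. *)
Definition xe (i : nat) : R := nth 0 x i.-1.

Definition S_alpha (k0 : nat) : R := \sum_(1 <= i < k0.+1) xe i - r.
Definition S_beta (k0 k1 : nat) : R := \sum_(k0.+1 <= i < k1.+1) xe i.
Definition rho (k0 k1 : nat) : R := (k0 * (k1 - k0) + (k - k0) ^ 2)%N%:R.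
Definition theta (k0 k1 : nat) : R :=
  (k0%:R * S_beta k0 k1 - (k - k0)%N%:R * S_alpha k0) / rho k0 k1.
Definition lambda (k0 k1 : nat) : R :=
  ((k - k0)%N%:R * S_beta k0 k1 + (k1 - k0)%N%:R * S_alpha k0) / rho k0 k1.

(* Conventions x^0_0 = +oo and x^0_{n+1} = -oo. *)
Definition kkt1 (k0 k1 : nat) : bool := 0 < lambda k0 k1.
Definition kkt2 (k0 k1 : nat) : bool :=
  (k0 == 0)%N || (theta k0 k1 + lambda k0 k1 < xe k0).
Definition kkt3 (k0 k1 : nat) : bool := xe k0.+1 <= theta k0 k1 + lambda k0 k1.
Definition kkt4 (k0 k1 : nat) : bool := theta k0 k1 <= xe k1.
Definition kkt5 (k0 k1 : nat) : bool :=
  (k1 == n)%N || (xe k1.+1 < theta k0 k1).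

Definition kkt_all (k0 k1 : nat) : bool :=
  [&& kkt1 k0 k1, kkt2 k0 k1, kkt3 k0 k1, kkt4 k0 k1 & kkt5 k0 k1].

(* Index pairs visited by the ESGS trajectory (before the stop test). *)
Inductive esgs_reach : nat -> nat -> Prop :=
| esgs_start : esgs_reach k.-1 k
| esgs_inc_k1 a b : esgs_reach a b -> kkt2 a b -> ~~ kkt5 a b -> esgs_reach a b.+1
| esgs_dec_k0 a b : esgs_reach a b -> ~~ kkt2 a b -> esgs_reach a.-1 b.

End ESGS.

(* Main.v *)
Require Import Defs.
From HB Require Import structures.
From mathcomp Require Import all_boot all_order all_algebra.
From mathcomp Require Import ring lra zify.
Import Order.TTheory GRing.Theory Num.Theory.
Local Open Scope ring_scope.

Section Aux.
Variables (R : realFieldType) (n k : nat) (r : R) (x : n.-tuple R).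

Definition PS (j : nat) : R := \sum_(1 <= i < j.+1) xe x i.

Lemma Sbeta_eq a b : (a <= b)%N -> S_beta x a b = PS b - PS a.
Proof.
move=> hab; rewrite /PS /S_beta (@big_cat_nat _ _ _ a.+1 1 b.+1) //=.
by rewrite addrC addrK.
Qed.

Lemma rho_eq a b : (a < k)%N -> (k <= b)%N ->
  rho R k a b = a%:R * (b%:R - a%:R) + (k%:R - a%:R) ^+ 2.
Proof.
move=> hak hkb.
rewrite /rho natrD natrM natrX !natrB //; lia.
Qed.

Lemma rho_gt0 a b : (a < k)%N -> (k <= b)%N -> 0 < rho R k a b.
Proof. move=> hak hkb; rewrite /rho ltr0n; nia. Qed.

Lemma theta_id a b th mu u v : (a < k)%N -> (k <= b)%N ->
  u = PS a - a%:R * mu + k%:R * th - r ->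
  v = PS b - PS a - (b%:R - k%:R) * th - (k%:R - a%:R) * mu ->
  rho R k a b * (theta k r x a b - th) = a%:R * v - (k%:R - a%:R) * u.
Proof.
move=> hak hkb -> ->.
have hr : 0 < rho R k a b by apply: rho_gt0.
have hab : (a <= b)%N by lia.
rewrite /theta Sbeta_eq // /S_alpha -/(PS a) natrB; last lia.
rewrite mulrBr mulrC divfK; last by rewrite gt_eqF.
rewrite (rho_eq _ _ hak hkb); ring.
Qed.

Lemma mu_id a b th mu u v : (a < k)%N -> (k <= b)%N ->
  u = PS a - a%:R * mu + k%:R * th - r ->
  v = PS b - PS a - (b%:R - k%:R) * th - (k%:R - a%:R) * mu ->
  rho R k a b * (theta k r x a b + lambda k r x a b - mu)
     = k%:R * v + (b%:R - k%:R) * u.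
Proof.
move=> hak hkb -> ->.
have hr : 0 < rho R k a b by apply: rho_gt0.
have hab : (a <= b)%N by lia.
rewrite /theta /lambda Sbeta_eq // /S_alpha -/(PS a) !natrB; try lia.
rewrite -mulrDl mulrBr mulrC divfK; last by rewrite gt_eqF.
rewrite (rho_eq _ _ hak hkb); ring.
Qed.

Lemma res_zero a b : (a < k)%N -> (k <= b)%N ->
  PS a - a%:R * (theta k r x a b + lambda k r x a b) + k%:R * theta k r x a b - r = 0 /\
  PS b - PS a - (b%:R - k%:R) * theta k r x a b
    - (k%:R - a%:R) * (theta k r x a b + lambda k r x a b) = 0.
Proof.
move=> hak hkb.
have hr : 0 < rho R k a b by apply: rho_gt0.
have hab : (a <= b)%N by lia.
have hr0 : rho R k a b != 0 by rewrite gt_eqF.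
rewrite /theta /lambda Sbeta_eq // /S_alpha -/(PS a) !natrB; try lia.
move: hr0; rewrite (rho_eq _ _ hak hkb) => hr0.
split; field => //.
Qed.

Lemma sum_le m p c : (m <= p)%N ->
  (forall i, (m < i <= p)%N -> xe x i <= c) -> PS p - PS m <= (p%:R - m%:R) * c.
Proof.
move=> hmp h; rewrite /PS (@big_cat_nat _ _ _ m.+1 1 p.+1) //= addrC addrK.
rewrite -natrB // mulr_natl -(subSS m p) -sumr_const_nat.
by apply: ler_sum_nat => i /andP[hi1 hi2]; apply: h; lia.
Qed.

Lemma sum_ge m p c : (m <= p)%N ->
  (forall i, (m < i <= p)%N -> c <= xe x i) -> (p%:R - m%:R) * c <= PS p - PS m.
Proof.
move=> hmp h; rewrite /PS (@big_cat_nat _ _ _ m.+1 1 p.+1) //= addrC addrK.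
rewrite -natrB // mulr_natl -(subSS m p) -sumr_const_nat.
by apply: ler_sum_nat => i /andP[hi1 hi2]; apply: h; lia.
Qed.

End Aux.

Theorem lemma3p6 (R : realFieldType) (n k : nat) (r : R) (x : n.-tuple R) :
  (2 <= n)%N -> (1 <= k <= n)%N ->
  (forall i : nat, (1 <= i < n)%N -> xe x i.+1 <= xe x i) ->
  r < \sum_(1 <= i < k.+1) xe x i ->
  forall k0 k1 : nat,
    esgs_reach k r x k0 k1 -> kkt2 k r x k0 k1 -> ~~ kkt5 k r x k0 k1 ->
  forall kb0 kb1 : nat, (kb0 < k)%N -> (k <= kb1 <= n)%N ->
    kkt_all k r x kb0 kb1 ->
    (kb0 <= k0)%N /\ (k1 <= kb1)%N.
Proof.
move=> hn /andP[hk1 hkn] hs _ k0 k1 hreach _ _ kb0 kb1 hkb0 /andP[hkb1a hkb1b].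
move=> /and5P[_ h2 h3 h4 h5].
have mono : forall j i, (1 <= j)%N -> (j <= i)%N -> (i <= n)%N -> xe x i <= xe x j.
  move=> j; elim => [|i IH] hj hji hin; first lia.
  case: (ltngtP j i.+1) => hc; [|lia|by rewrite hc].
  apply: le_trans (IH hj _ _); [apply: hs|lia|lia]; lia.
set th := theta k r x kb0 kb1.
set mu := th + lambda k r x kb0 kb1.
have [z1 z2] := @res_zero R n k r x kb0 kb1 hkb0 hkb1a.
rewrite -/th -/mu in z1 z2.
have inv : forall a b, esgs_reach k r x a b ->
    [/\ (a < k)%N, (k <= b)%N, (b <= n)%N, (kb0 <= a)%N & (b <= kb1)%N].
  move=> a b; elim => {a b hreach} [| a b H [ha hb hbn' h0 h1] k2 k5
                                    | a b H [ha hb hbn' h0 h1] k2].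
  - split; lia.
  - move: k5; rewrite /kkt5 negb_or => /andP[hbn]; rewrite -leNgt => hle.
    have hne : b != kb1.
      apply/eqP => Eb; subst b.
      move: h5; rewrite /kkt5 (negbTE hbn) /= -/th => hlt.
      set u := PS R n x a - a%:R * mu + k%:R * th - r.
      set v := PS R n x kb1 - PS R n x a - (kb1%:R - k%:R) * th - (k%:R - a%:R) * mu.
      have hid := @theta_id R n k r x a kb1 th mu u v ha hb erefl erefl.
      have hsum : PS R n x a - PS R n x kb0 <= (a%:R - kb0%:R) * mu.
        apply: sum_le => // i hi; apply: le_trans h3.
        apply: mono; lia.
      have hu : u <= 0 by rewrite /u; lra.
      have hv : v = - u by rewrite /v /u; lra.
      have hpos : 0 <= rho R k a kb1 * (theta k r x a kb1 - th).
        rewrite hid hv.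
        have -> : a%:R * - u - (k%:R - a%:R) * u = k%:R * (- u) by ring.
        by apply: mulr_ge0; rewrite ?ler0n ?oppr_ge0.
      have hr : 0 < rho R k a kb1 by apply: rho_gt0.
      rewrite pmulr_rge0 // subr_ge0 in hpos.
      lra.
    split; lia.
  - move: k2; rewrite /kkt2 negb_or => /andP[ha0]; rewrite -leNgt => hle.
    have hne : a != kb0.
      apply/eqP => Ea; subst a.
      move: h2; rewrite /kkt2 (negbTE ha0) /= -/th -/mu => hlt.
      set u := PS R n x kb0 - kb0%:R * mu + k%:R * th - r.
      set v := PS R n x b - PS R n x kb0 - (b%:R - k%:R) * th - (k%:R - kb0%:R) * mu.
      have hid := @mu_id R n k r x kb0 b th mu u v ha hb erefl erefl.
      have hsum : (kb1%:R - b%:R) * th <= PS R n x kb1 - PS R n x b.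
        apply: sum_ge => // i hi; apply: le_trans h4 _.
        apply: mono; lia.
      have hu : u = 0 by rewrite /u; lra.
      have hv : v <= 0 by rewrite /v; lra.
      have hneg : rho R k kb0 b * (theta k r x kb0 b + lambda k r x kb0 b - mu) <= 0.
        rewrite hid hu mulr0 addr0.
        by rewrite pmulr_rle0 ?ltr0n //; lia.
      have hr : 0 < rho R k kb0 b by apply: rho_gt0.
      rewrite pmulr_rle0 // subr_le0 in hneg.
      lra.
    split; lia.
have [_ _ _ ? ?] := inv _ _ hreach; by split.
Qed.
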